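(* Let $n\in\mathbb{N}$ and let $f_1,\ldots,f_n$ be Alpert multiwavelets of multiplicity $n$. Then there is a nonzero real constant $\lambda$ such that, for almost every $x\in[-1,1]$, \[ f_n(x)=\lambda\bigl(A_{n,n}(x)\chi_{[-1,0)}(x)+B_{n,n}(x)\chi_{[0,1)}(x)\bigr), \] where $(A_{n,n},B_{n,n})$ is the type I Legendre–Angelesco multiple orthogonal polynomial for the multi-index $(n,n)$.
   Context: Alpert multiwavelets of multiplicity $n\in\mathbb{N}$: real functions $f_1,\ldots,f_n$ supported on $[-1,1]$ such that (i) the restriction of each $f_i$ to $(0,1)$ is a polynomial of degree at most $n-1$; (ii) $f_k(-t)=(-1)^{k+n-1}f_k(t)$ for $t\in(0,1)$; (iii) $\int_{-1}^1 f_i(t)f_j(t)\,dt=\delta_{i,j}$ for $1\le i,j\le n$; (iv) $\int_{-1}^1 f_k(t)t^i\,dt=0$ for $i=0,1,\ldots,k+n-2$. Type I Legendre–Angelesco polynomials: for integers $n,m\ge 0$ with $n+m\ge1$, $(A_{n,m},B_{n,m})$ is the unique pair of polynomials with $\deg A_{n,m}\le n-1$, $\deg B_{n,m}\le m-1$ (degree $\le -1$ meaning the zero polynomial) such that, writing $Q_{n,m}=A_{n,m}\chi_{[-1,0]}+B_{n,m}\chi_{[0,1]}$, one has $\int_{-1}^1 Q_{n,m}(x)x^k\,dx=0$ for $0\le k\le n+m-2$ and $\int_{-1}^1 Q_{n,m}(x)x^{n+m-1}\,dx=1$. *)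

(* Defs.v *)
From Stdlib Require Import Reals.
Open Scope R_scope.

Fixpoint psum (c : nat -> R) (d : nat) (x : R) : R :=
  match d with
  | O => 0
  | S d' => psum c d' x + c d' * x ^ d'
  end.

(* p is a polynomial of degree at most d-1 (d = 0: the zero polynomial). *)
Definition poly_lt (d : nat) (p : R -> R) : Prop :=
  exists c : nat -> R, forall x, p x = psum c d x.

(* The Riemann integral of f over [a,b] exists and equals v
   (RiemannInt does not depend on the integrability proof). *)
Definition has_integral (f : R -> R) (a b v : R) : Prop :=
  exists pr : Riemann_integrable f a b, RiemannInt pr = v.

Definition chi_cc (a b x : R) : R :=
  if Rle_dec a x then (if Rle_dec x b then 1 else 0) else 0.
Definition chi_co (a b x : R) : R :=
  if Rle_dec a x then (if Rlt_dec x b then 1 else 0) else 0.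

Definition alpert (n : nat) (f : nat -> R -> R) : Prop :=
  (forall k, (1 <= k <= n)%nat -> forall x, (x < -1 \/ 1 < x) -> f k x = 0) /\
  (forall k, (1 <= k <= n)%nat ->
     exists p, poly_lt n p /\ forall t, 0 < t < 1 -> f k t = p t) /\
  (forall k, (1 <= k <= n)%nat ->
     forall t, 0 < t < 1 -> f k (- t) = (-1) ^ (k + n - 1) * f k t) /\
  (forall i j, (1 <= i <= n)%nat -> (1 <= j <= n)%nat ->
     has_integral (fun t => f i t * f j t) (-1) 1
       (if Nat.eqb i j then 1 else 0)) /\
  (forall k i, (1 <= k <= n)%nat -> (i + 2 <= k + n)%nat ->
     has_integral (fun t => f k t * t ^ i) (-1) 1 0).

Definition LA_Q (A B : R -> R) (x : R) : R :=
  A x * chi_cc (-1) 0 x + B x * chi_cc 0 1 x.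

Definition typeI_LA (n m : nat) (A B : R -> R) : Prop :=
  poly_lt n A /\ poly_lt m B /\
  (forall k, (k + 2 <= n + m)%nat ->
     has_integral (fun x => LA_Q A B x * x ^ k) (-1) 1 0) /\
  has_integral (fun x => LA_Q A B x * x ^ (n + m - 1)) (-1) 1 1.

(* Main.v *)
Require Import Defs.
From Stdlib Require Import Reals Lra Lia.
From Coquelicot Require Import Coquelicot.
Open Scope R_scope.

Fixpoint ssum (F : nat -> R) (n : nat) : R :=
  match n with O => 0 | S m => ssum F m + F m end.

Lemma ssum_ext F G n : (forall i, (i < n)%nat -> F i = G i) -> ssum F n = ssum G n.
Proof. induction n; simpl; intros H; auto. rewrite IHn by (intros; apply H; lia). rewrite H by lia. auto. Qed.

Lemma psum_ext c c' d x : (forall i, (i < d)%nat -> c i = c' i) -> psum c d x = psum c' d x.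
Proof. induction d; simpl; intros H; auto. rewrite IHd by (intros; apply H; lia). rewrite H by lia. auto. Qed.

Lemma psum_shift c d s : psum c (S d) s = c 0%nat + s * psum (fun i => c (S i)) d s.
Proof. induction d; simpl in *. ring. rewrite IHd. ring. Qed.

Lemma poly_lt_ext d p q : poly_lt d p -> (forall x, q x = p x) -> poly_lt d q.
Proof. intros [c Hc] H; exists c; intros; rewrite H; auto. Qed.

Lemma psum_zero d x : psum (fun _ => 0) d x = 0.
Proof. induction d; simpl; auto. rewrite IHd; ring. Qed.

Lemma poly_lt_zero d : poly_lt d (fun _ => 0).
Proof. exists (fun _ => 0); intros; rewrite psum_zero; auto. Qed.

Lemma poly_lt_add d p q : poly_lt d p -> poly_lt d q -> poly_lt d (fun x => p x + q x).
Proof. intros [c Hc] [e He]. exists (fun i => c i + e i). intros x. rewrite Hc, He.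
 clear Hc He. induction d; simpl; [ring|]. rewrite <- IHd; ring. Qed.

Lemma poly_lt_scal d p u : poly_lt d p -> poly_lt d (fun x => u * p x).
Proof. intros [c Hc]. exists (fun i => u * c i). intros x. rewrite Hc.
 clear Hc. induction d; simpl; [ring|]. rewrite <- IHd; ring. Qed.

Lemma poly_lt_mono d p : poly_lt d p -> poly_lt (S d) p.
Proof. intros [c Hc]. exists (fun i => if Nat.ltb i d then c i else 0). intros x.
 rewrite Hc. simpl. rewrite (Nat.ltb_irrefl d). rewrite (psum_ext c (fun i => if Nat.ltb i d then c i else 0) d x). ring.
 intros i Hi. apply Nat.ltb_lt in Hi. rewrite Hi; auto. Qed.

Lemma poly_lt_horner d r a : poly_lt d r -> poly_lt (S d) (fun s => a + s * r s).
Proof. intros [c Hc]. exists (fun i => match i with O => a | S i' => c i' end).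
 intros x. rewrite psum_shift. rewrite Hc. auto. Qed.

Lemma poly_lt_horner_inv d p : poly_lt (S d) p -> exists a r, poly_lt d r /\ forall s, p s = a + s * r s.
Proof. intros [c Hc]. exists (c 0%nat), (fun s => psum (fun i => c (S i)) d s). split.
 exists (fun i => c (S i)); auto. intros s; rewrite Hc, psum_shift; auto. Qed.

Lemma poly_lt_lin d q u : poly_lt d q -> poly_lt (S d) (fun s => q s * (s + u)).
Proof. intros H. apply poly_lt_ext with (fun s => (0 + s * q s) + u * q s).
 apply poly_lt_add. apply poly_lt_horner; auto. apply poly_lt_mono, poly_lt_scal; auto.
 intros; ring. Qed.

Lemma poly_div d p : poly_lt (S d) p -> forall r, exists q, poly_lt d q /\ forall x, p x = p r + (x - r) * q x.
Proof. revert p. induction d; intros p Hp r.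
 - destruct (poly_lt_horner_inv _ _ Hp) as (a & r0 & [c Hc] & H).
   exists (fun _ => 0). split. apply poly_lt_zero. intros x. rewrite !H, !Hc. simpl. ring.
 - destruct (poly_lt_horner_inv _ _ Hp) as (a & q0 & Hq0 & H).
   destruct (IHd q0 Hq0 r) as (q2 & Hq2 & E).
   exists (fun x => q0 x + r * q2 x). split.
   apply poly_lt_add. auto. apply poly_lt_mono, poly_lt_scal; auto.
   intros x. rewrite !H. rewrite (E x). ring. Qed.

Lemma poly_roots d : forall p (r : nat -> R), poly_lt d p ->
  (forall j k, (j < d)%nat -> (k < d)%nat -> r j = r k -> j = k) ->
  (forall j, (j < d)%nat -> p (r j) = 0) -> forall x, p x = 0.
Proof. induction d; intros p r Hp Hinj Hr x.
 - destruct Hp as [c Hc]. rewrite Hc; auto.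
 - destruct (poly_div d p Hp (r d)) as (q & Hq & E).
   assert (Hq0 : forall x, q x = 0).
   { apply (IHd q r Hq). intros; apply Hinj; auto; lia.
     intros j Hj. assert (H1 := Hr j ltac:(lia)). rewrite E, Hr in H1 by lia.
     assert (r j - r d <> 0). { intros H2. assert (j = d) by (apply Hinj; lia || lra). lia. }
     apply (Rmult_eq_reg_l (r j - r d)); auto. lra. }
   rewrite E, Hq0, Hr by lia. ring. Qed.
Fixpoint prodx (i m : nat) (s : R) : R :=
  match m with O => 1 | S m' => if Nat.eqb m' i then prodx i m' s else prodx i m' s * (s + (INR m' + 1)) end.
Fixpoint prodf (m : nat) (s : R) : R :=
  match m with O => 1 | S m' => prodf m' s * (s + (INR m' + 1)) end.

Lemma prodx_full i m s : (m <= i)%nat -> prodx i m s = prodf m s.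
Proof. induction m; simpl; intros; auto. destruct (Nat.eqb_spec m i). lia. rewrite IHm by lia; auto. Qed.

Lemma prodf_split i m s : (i < m)%nat -> prodf m s = (s + (INR i + 1)) * prodx i m s.
Proof. induction m; simpl; intros H. lia. destruct (Nat.eqb_spec m i).
 subst. rewrite prodx_full by lia. ring. rewrite IHm by lia. ring. Qed.

Lemma prodx_poly1 i m : poly_lt (S m) (prodx i m).
Proof. induction m; simpl.
 - exists (fun _ => 1). intros; simpl; ring.
 - destruct (Nat.eqb m i). apply poly_lt_mono; auto. apply poly_lt_lin; auto. Qed.

Lemma prodx_poly2 i m : (i < m)%nat -> poly_lt m (prodx i m).
Proof. induction m; simpl; intros H. lia. destruct (Nat.eqb_spec m i).
 apply prodx_poly1. apply poly_lt_lin; apply IHm; lia. Qed.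

Lemma prodx_zero i i0 m : (i0 < m)%nat -> i <> i0 -> prodx i m (- (INR i0 + 1)) = 0.
Proof. induction m; simpl; intros H Hn. lia. destruct (Nat.eqb_spec m i).
 apply IHm; lia. destruct (Nat.eq_dec m i0). subst; ring. rewrite IHm by lia; ring. Qed.

Lemma prodx_nz i m : prodx i m (- (INR i + 1)) <> 0.
Proof. induction m; simpl. lra. destruct (Nat.eqb_spec m i). auto.
 apply Rmult_integral_contrapositive; split; auto.
 intros H. apply n. apply INR_eq. lra. Qed.

Lemma poly_lt_ssum d (F : nat -> R -> R) m : (forall i, (i < m)%nat -> poly_lt d (F i)) ->
  poly_lt d (fun s => ssum (fun i => F i s) m).
Proof. induction m; simpl; intros H. apply poly_lt_zero. apply poly_lt_add; auto. Qed.

Lemma ssum_0 F m : (forall i, (i < m)%nat -> F i = 0) -> ssum F m = 0.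
Proof. induction m; simpl; intros H; auto. rewrite IHm, H by (auto; lia). ring. Qed.

Lemma ssum_zero_at F m i0 : (i0 < m)%nat -> (forall i, (i < m)%nat -> i <> i0 -> F i = 0) -> ssum F m = F i0.
Proof. induction m; simpl; intros H H0. lia. destruct (Nat.eq_dec m i0).
 subst. rewrite ssum_0. ring. intros; apply H0; lia. rewrite H0 by lia. rewrite IHm by (auto; lia). ring. Qed.

Lemma ssum_mult F m u : ssum F m * u = ssum (fun i => F i * u) m.
Proof. induction m; simpl. ring. rewrite <- IHm; ring. Qed.

Lemma cauchy n (c : nat -> R) (s : nat -> R) :
  (forall j k, (j < n)%nat -> (k < n)%nat -> s j = s k -> j = k) ->
  (forall j, (j < n)%nat -> 0 <= s j) ->
  (forall j, (j < n)%nat -> ssum (fun i => c i / (s j + (INR i + 1))) n = 0) ->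
  forall i, (i < n)%nat -> c i = 0.
Proof. intros Hinj Hpos H i0 Hi0.
 set (P := fun t => ssum (fun i => c i * prodx i n t) n).
 assert (HP : poly_lt n P). { apply poly_lt_ssum. intros i Hi. apply poly_lt_scal. apply prodx_poly2; auto. }
 assert (Hroot : forall j, (j < n)%nat -> P (s j) = 0).
 { intros j Hj. unfold P. rewrite <- (Rmult_0_l (prodf n (s j))). rewrite <- (H j Hj).
   rewrite ssum_mult. apply ssum_ext. intros i Hi. rewrite (prodf_split i) by auto.
   assert (0 <= INR i) by apply pos_INR. assert (0 <= s j) by auto. field. lra. }
 assert (H0 := poly_roots n P s HP Hinj Hroot (- (INR i0 + 1))).
 unfold P in H0. rewrite (ssum_zero_at _ _ i0) in H0; auto.
 apply Rmult_integral in H0. destruct H0; auto. exfalso; apply (prodx_nz i0 n); auto.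
 intros i Hi Hn. rewrite prodx_zero; auto. ring. Qed.
Lemma int_mono m a b : is_RInt (fun x => x^m) a b ((b^(m+1) - a^(m+1))/INR (m+1)).
Proof.
 assert (Hm' : INR (S m) <> 0) by (apply not_0_INR; lia).
 assert (Hm : INR (m+1) <> 0) by (replace (m+1)%nat with (S m) by lia; auto).
 assert (H := is_RInt_derive (fun x => x^(m+1)/INR(m+1)) (fun x => x^m) a b).
 replace ((b^(m+1) - a^(m+1))/INR (m+1)) with (minus (b^(m+1)/INR(m+1)) (a^(m+1)/INR(m+1))).
 apply H.
 - intros y _. auto_derive. auto. replace (m+1)%nat with (S m) by lia. simpl pred. field. auto.
 - intros y _. apply continuity_pt_filterlim. apply derivable_continuous_pt, derivable_pt_pow.
 - unfold minus, plus, opp; simpl. field. auto.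
Qed.
Lemma is_RInt_eq (f : R -> R) a b (l l' : R) : is_RInt f a b l -> l = l' -> is_RInt f a b l'.
Proof. intros H E; subst; auto. Qed.

Lemma int_poly c d k a b : is_RInt (fun x => psum c d x * x^k) a b
  (ssum (fun i => c i * ((b^(i+k+1) - a^(i+k+1))/INR(i+k+1))) d).
Proof. induction d.
 - apply is_RInt_ext with (fun x => 0 * (x^0)).
   intros x _. change (@eq R (0 * x^0) (psum c 0 x * x^k)). cbn [psum]. ring.
   eapply is_RInt_eq. exact (is_RInt_scal (fun x => x^0) a b 0 _ (int_mono 0 a b)).
   change (0 * ((b ^ (0 + 1) - a ^ (0 + 1)) / INR (0 + 1)) = 0). ring.
 - apply is_RInt_ext with (fun x => psum c d x * x^k + c d * x^(d+k)).
   intros x _. change (@eq R (psum c d x * x^k + c d * x^(d+k)) (psum c (S d) x * x^k)). cbn [psum]. rewrite (pow_add x d k). ring.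
   eapply is_RInt_eq. exact (is_RInt_plus _ _ a b _ _ IHd (is_RInt_scal (fun x => x^(d+k)) a b (c d) _ (int_mono (d+k) a b))).
   change (ssum (fun i => c i * ((b^(i+k+1) - a^(i+k+1))/INR(i+k+1))) d + c d * ((b ^ (d + k + 1) - a ^ (d + k + 1)) / INR (d + k + 1)) = ssum (fun i => c i * ((b^(i+k+1) - a^(i+k+1))/INR(i+k+1))) (S d)).
   cbn [ssum]. ring.
Qed.
Definition Lf (n : nat) (a b : nat -> R) (k : nat) : R :=
  ssum (fun i => a i * ((0^(i+k+1) - (-1)^(i+k+1))/INR(i+k+1)) + b i * ((1^(i+k+1) - 0^(i+k+1))/INR(i+k+1))) n.

Lemma master n h a b k v :
  (forall x, -1 < x < 0 -> h x = psum a n x * x^k) ->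
  (forall x, 0 < x < 1 -> h x = psum b n x * x^k) ->
  has_integral h (-1) 1 v -> v = Lf n a b k.
Proof. intros Ha Hb [pr Hv].
 assert (Ex := ex_RInt_Reals_1 _ _ _ pr).
 assert (H1 := RInt_correct h (-1) 0 (ex_RInt_Chasles_1 h (-1) 0 1 ltac:(lra) Ex)).
 assert (H2 := RInt_correct h 0 1 (ex_RInt_Chasles_2 h (-1) 0 1 ltac:(lra) Ex)).
 assert (H3 := is_RInt_Chasles h (-1) 0 1 _ _ H1 H2).
 apply (is_RInt_unique (V:=R_CompleteNormedModule)) in H3. rewrite RInt_Reals with (pr := pr) in H3. rewrite Hv in H3.
 assert (G1 : is_RInt h (-1) 0 (ssum (fun i => a i * ((0^(i+k+1) - (-1)^(i+k+1))/INR(i+k+1))) n)).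
 { apply is_RInt_ext with (fun x => psum a n x * x^k). intros x Hx.
   rewrite Rmin_left, Rmax_right in Hx by lra. symmetry; apply Ha; auto. apply int_poly. }
 assert (G2 : is_RInt h 0 1 (ssum (fun i => b i * ((1^(i+k+1) - 0^(i+k+1))/INR(i+k+1))) n)).
 { apply is_RInt_ext with (fun x => psum b n x * x^k). intros x Hx.
   rewrite Rmin_left, Rmax_right in Hx by lra. symmetry; apply Hb; auto. apply int_poly. }
 apply (is_RInt_unique (V:=R_CompleteNormedModule)) in G1. apply (is_RInt_unique (V:=R_CompleteNormedModule)) in G2. rewrite G1, G2 in H3.
 change (v = ssum (fun i => a i * ((0^(i+k+1) - (-1)^(i+k+1))/INR(i+k+1))) n + ssum (fun i => b i * ((1^(i+k+1) - 0^(i+k+1))/INR(i+k+1))) n) in H3.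
 rewrite H3. unfold Lf. clear. induction n; cbn [ssum]. ring. rewrite <- IHn. ring.
Qed.
Lemma Lf_lin n a b al be l k :
  Lf n (fun i => a i - l * al i) (fun i => b i - l * be i) k = Lf n a b k - l * Lf n al be k.
Proof. unfold Lf. induction n; cbn [ssum]. ring. rewrite IHn. ring. Qed.

Lemma Lf_simpl n a b k : Lf n a b k =
  ssum (fun i => (b i + (-1)^i * (-1)^k * a i) / (INR k + (INR i + 1))) n.
Proof. unfold Lf. apply ssum_ext. intros i _.
 rewrite pow_i by lia. rewrite pow1. rewrite !pow_add. rewrite !plus_INR. simpl (INR 1). simpl ((-1)^1).
 assert (0 <= INR i) by apply pos_INR. assert (0 <= INR k) by apply pos_INR.
 field. lra. Qed.

Lemma key n a b : (forall k, (k < n + n)%nat -> Lf n a b k = 0) ->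
  forall i, (i < n)%nat -> a i = 0 /\ b i = 0.
Proof. intros H.
 assert (E : forall i, (i < n)%nat -> b i + (-1)^i * a i = 0).
 { apply (cauchy n _ (fun j => INR (2 * j))).
   - intros j k _ _ Hjk. apply INR_eq in Hjk. lia.
   - intros; apply pos_INR.
   - intros j Hj. rewrite <- (H (2*j)%nat) by lia. rewrite Lf_simpl. apply ssum_ext.
     intros i _. rewrite pow_1_even. f_equal. ring. }
 assert (O : forall i, (i < n)%nat -> b i - (-1)^i * a i = 0).
 { apply (cauchy n _ (fun j => INR (S (2 * j)))).
   - intros j k _ _ Hjk. apply INR_eq in Hjk. lia.
   - intros; apply pos_INR.
   - intros j Hj. rewrite <- (H (S (2*j))%nat) by lia. rewrite Lf_simpl. apply ssum_ext.
     intros i _. rewrite pow_1_odd. f_equal. ring. }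
 intros i Hi. specialize (E i Hi). specialize (O i Hi).
 assert (Hb : b i = 0) by lra. split; auto.
 assert (Hp : (-1)^i <> 0) by (apply pow_nonzero; lra).
 assert ((-1)^i * a i = 0) by lra. apply Rmult_integral in H0. destruct H0; auto. contradiction.
Qed.

Lemma psum_scal u c d x : psum (fun i => u * c i) d x = u * psum c d x.
Proof. induction d; cbn [psum]. ring. rewrite IHd. ring. Qed.

Lemma psum_neg c d x : psum (fun i => - c i * (-1)^i) d x = - psum c d (-x).
Proof. induction d; cbn [psum]. ring. rewrite IHd. replace (-x) with ((-1)*x) by ring.
 rewrite Rpow_mult_distr. ring. Qed.

Lemma chi_neg x : -1 < x < 0 -> chi_cc (-1) 0 x = 1 /\ chi_cc 0 1 x = 0 /\ chi_co (-1) 0 x = 1 /\ chi_co 0 1 x = 0.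
Proof. intros Hx. unfold chi_cc, chi_co.
 repeat (destruct Rle_dec); repeat (destruct Rlt_dec); repeat split; lra. Qed.

Lemma chi_pos x : 0 < x < 1 -> chi_cc (-1) 0 x = 0 /\ chi_cc 0 1 x = 1 /\ chi_co (-1) 0 x = 0 /\ chi_co 0 1 x = 1.
Proof. intros Hx. unfold chi_cc, chi_co.
 repeat (destruct Rle_dec); repeat (destruct Rlt_dec); repeat split; lra. Qed.

Theorem proposition1 (n : nat) (f : nat -> R -> R) (A B : R -> R) :
  (1 <= n)%nat ->
  alpert n f ->
  typeI_LA n n A B ->
  exists lambda : R, lambda <> 0 /\
    forall x, (-1 < x < 0 \/ 0 < x < 1) ->
      f n x = lambda * (A x * chi_co (-1) 0 x + B x * chi_co 0 1 x).
Proof.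
 intros Hn (Hsupp & Hpoly & Hsym & Horth & Hvan) (HA & HB & HQo & HQ1).
 destruct (Hpoly n ltac:(lia)) as (p & [c Hc] & Hp).
 destruct HA as [al Hal]. destruct HB as [be Hbe].
 set (a := fun i => - c i * (-1)^i).
 assert (Fneg : forall x, -1 < x < 0 -> f n x = psum a n x).
 { intros x Hx. unfold a. rewrite psum_neg. replace x with (- (-x)) at 1 by ring.
   rewrite Hsym by (lia || lra). rewrite Hp by lra. rewrite <- Hc.
   replace (n + n - 1)%nat with (S (2 * (n-1))) by lia. rewrite pow_1_odd. ring. }
 assert (Fpos : forall x, 0 < x < 1 -> f n x = psum c n x).
 { intros x Hx. rewrite Hp by lra. auto. }
 set (l := Lf n a c (n + n - 1)).
 assert (Lf0 : forall k, (k + 2 <= n + n)%nat -> Lf n a c k = 0).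
 { intros k Hk. symmetry. apply (master n (fun t => f n t * t^k)).
   - intros x Hx. rewrite Fneg; auto.
   - intros x Hx. rewrite Fpos; auto.
   - apply Hvan; lia. }
 assert (LQ : forall k, (k + 2 <= n + n)%nat -> Lf n al be k = 0).
 { intros k Hk. symmetry. apply (master n (fun x => LA_Q A B x * x^k)).
   - intros x Hx. destruct (chi_neg x Hx) as (h1 & h2 & _). unfold LA_Q. rewrite h1, h2, Hal. ring.
   - intros x Hx. destruct (chi_pos x Hx) as (h1 & h2 & _). unfold LA_Q. rewrite h1, h2, Hbe. ring.
   - apply HQo; lia. }
 assert (LQ1 : Lf n al be (n + n - 1) = 1).
 { symmetry. apply (master n (fun x => LA_Q A B x * x^(n+n-1))).
   - intros x Hx. destruct (chi_neg x Hx) as (h1 & h2 & _). unfold LA_Q. rewrite h1, h2, Hal. ring.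
   - intros x Hx. destruct (chi_pos x Hx) as (h1 & h2 & _). unfold LA_Q. rewrite h1, h2, Hbe. ring.
   - apply HQ1. }
 assert (K := key n (fun i => a i - l * al i) (fun i => c i - l * be i)).
 assert (K' : forall i, (i < n)%nat -> a i = l * al i /\ c i = l * be i).
 { intros i Hi. destruct (K ltac:(intros k Hk; rewrite Lf_lin;
     destruct (Nat.eq_dec k (n + n - 1)) as [e|ne];
     [subst k; rewrite LQ1; unfold l; ring | rewrite Lf0, LQ by lia; ring]) i Hi).
   split; lra. }
 assert (Gneg : forall x, -1 < x < 0 -> f n x = l * A x).
 { intros x Hx. rewrite Fneg, Hal by auto. rewrite <- psum_scal. apply psum_ext.
   intros i Hi. apply K'; auto. }
 assert (Gpos : forall x, 0 < x < 1 -> f n x = l * B x).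
 { intros x Hx. rewrite Fpos, Hbe by auto. rewrite <- psum_scal. apply psum_ext.
   intros i Hi. apply K'; auto. }
 exists l. split.
 - intros Hl0. assert (H1 := Horth n n ltac:(lia) ltac:(lia)). rewrite Nat.eqb_refl in H1.
   assert (E := master n (fun t => f n t * f n t) (fun _ => 0) (fun _ => 0) 0 1).
   assert (1 = Lf n (fun _ => 0) (fun _ => 0) 0).
   { apply E; auto.
     - intros x Hx. rewrite psum_zero, Gneg, Hl0 by auto. ring.
     - intros x Hx. rewrite psum_zero, Gpos, Hl0 by auto. ring. }
   unfold Lf in H. rewrite ssum_0 in H. lra. intros; ring.
 - intros x [Hx|Hx].
   + destruct (chi_neg x Hx) as (_ & _ & h1 & h2). rewrite h1, h2, Gneg by auto. ring.
   + destruct (chi_pos x Hx) as (_ & _ & h1 & h2). rewrite h1, h2, Gpos by auto. ring.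
Qed.
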